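(* The following identities hold: $$\sum_{n=1}^{\infty}\frac{1}{4^n(2n+1)^2}\frac{\binom{4n}{2n}}{\binom{2n}{n}}=3-2\sqrt{2},\qquad \sum_{n=1}^{\infty}\frac{1}{4^n(2n+1)(2n+3)}\frac{\binom{4n}{2n}}{\binom{2n+2}{n+1}}=\frac{11-7\sqrt{2}}{30},$$ $$\sum_{n=1}^{\infty}\frac{1}{4^n(2n+1)(2n+5)}\frac{\binom{4n}{2n}}{\binom{2n+4}{n+2}}=\frac{172-107\sqrt{2}}{2520},\qquad \sum_{n=1}^{\infty}\frac{1}{4^n(2n+1)(2n+7)}\frac{\binom{4n}{2n}}{\binom{2n+6}{n+3}}=\frac{6808-4175\sqrt{2}}{480480}.$$ *)

(* Defs.v *)
From Stdlib Require Import Reals.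
From Coquelicot Require Export Coquelicot.
Open Scope R_scope.

Definition term (k n : nat) : R :=
  Binomial.C (4 * n) (2 * n) /
  (4 ^ n * INR (2 * n + 1) * INR (2 * n + 2 * k + 1) *
   Binomial.C (2 * n + 2 * k) (n + k)).

Definition series_from1 (k : nat) : nat -> R := fun m => term k (S m).

(* Main.v *)
Require Import Defs.
From Stdlib Require Import Reals Lra Lia.
From Coquelicot Require Import Coquelicot.
Open Scope R_scope.


Fixpoint a (m : nat) : R :=
  match m with O => 1 | S p => a p * (2 * INR p + 1) / (2 * INR p + 2) end.

Lemma a_S m : a (S m) = a m * (2 * INR m + 1) / (2 * INR m + 2).
Proof. reflexivity. Qed.

Lemma a_pos m : 0 < a m.
Proof.
  induction m as [|m IH]; simpl; [lra|].
  pose proof (pos_INR m).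
  apply Rmult_lt_0_compat; [apply Rmult_lt_0_compat; lra|].
  apply Rinv_0_lt_compat; lra.
Qed.

Lemma a_decr m : a (S m) <= a m.
Proof.
  rewrite a_S. pose proof (a_pos m). pose proof (pos_INR m).
  apply Rmult_le_reg_r with (2 * INR m + 2); [lra|].
  field_simplify; [|lra]. nra.
Qed.

Lemma a_mono m n : (m <= n)%nat -> a n <= a m.
Proof.
  induction 1; [lra|]. pose proof (a_decr m0). lra.
Qed.

Lemma a_le1 m : a m <= 1.
Proof. apply (a_mono 0 m); lia. Qed.

Lemma a_C m : Binomial.C (2 * m) m = 4 ^ m * a m.
Proof.
  induction m as [|m IH].
  - unfold Binomial.C; simpl; field.
  - assert (Ha : a m = Binomial.C (2 * m) m / 4 ^ m).
    { rewrite IH. field. apply pow_nonzero; lra. }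
    rewrite a_S, Ha. unfold Binomial.C.
    replace (2 * S m - S m)%nat with (S m) by lia.
    replace (2 * m - m)%nat with m by lia.
    replace (2 * S m)%nat with (S (S (2 * m))) by lia.
    rewrite !fact_simpl, !mult_INR, !S_INR, mult_INR.
    simpl pow.
    replace (INR 2) with 2 by (simpl; lra).
    pose proof (INR_fact_neq_0 m). pose proof (INR_fact_neq_0 (2*m)).
    pose proof (pos_INR m).
    field. repeat split; try lra. apply pow_nonzero; lra.
Qed.

Lemma term_a k n :
  term k n = a (2 * n) /
    (4 ^ k * (2 * INR n + 1) * (2 * INR n + 2 * INR k + 1) * a (n + k)).
Proof.
  unfold term.
  replace (4 * n)%nat with (2 * (2 * n))%nat by lia.
  replace (2 * n + 2 * k)%nat with (2 * (n + k))%nat by lia.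
  rewrite !a_C.
  replace (4 ^ (2 * n)) with (4 ^ n * 4 ^ n) by (rewrite <- pow_add; f_equal; lia).
  rewrite pow_add.
  replace (INR (2 * n + 1)) with (2 * INR n + 1) by (rewrite plus_INR, mult_INR; simpl; lra).
  replace (INR (2 * (n + k) + 1)) with (2 * INR n + 2 * INR k + 1) by (rewrite plus_INR, mult_INR, plus_INR; simpl; lra).
  pose proof (a_pos (n + k)). pose proof (a_pos (2 * n)).
  pose proof (pos_INR n). pose proof (pos_INR k).
  field. repeat split; try lra; apply pow_nonzero; lra.
Qed.


Definition G (M : nat) (x : R) : R := sum_f_R0 (fun m => a m * x ^ m) M.
Definition h (M : nat) (x : R) : R := G M x * sqrt (1 - x).

Lemma G_0 M : G M 0 = 1.
Proof.
  unfold G; induction M as [|M IH]; simpl; [ring|]. rewrite IH. ring.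
Qed.

Lemma h_0 M : h M 0 = 1.
Proof. unfold h. rewrite G_0. replace (1 - 0) with 1 by ring. rewrite sqrt_1. ring. Qed.

Lemma der_plus (f g : R -> R) x l1 l2 l :
  is_derive f x l1 -> is_derive g x l2 -> l1 + l2 = l ->
  is_derive (fun y => f y + g y) x l.
Proof.
  intros H1 H2 E. rewrite <- E. apply (is_derive_plus f g x l1 l2 H1 H2).
Qed.

Lemma h_der M x : x < 1 ->
  is_derive (h M) x (- (INR M + / 2) * a M * x ^ M / sqrt (1 - x)).
Proof.
  intros Hx.
  pose proof (sqrt_lt_R0 (1 - x) ltac:(lra)) as Hs.
  pose proof (sqrt_sqrt (1 - x) ltac:(lra)) as Hss.
  induction M as [|M IH].
  - unfold h, G; simpl.
    apply is_derive_ext with (fun y => sqrt (1 - y)).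
    { intros t; simpl; ring. }
    auto_derive; [lra|]. replace (1 + - x) with (1 - x) by ring. field. lra.
  - apply is_derive_ext with (fun y => h M y + a (S M) * y ^ (S M) * sqrt (1 - y)).
    { intros t; unfold h, G; simpl; ring. }
    apply der_plus with (1 := IH)
      (l2 := a (S M) * (INR (S M) * x ^ M * sqrt (1 - x) - x ^ (S M) / (2 * sqrt (1 - x)))).
    { auto_derive; [lra|]. replace (1 + - x) with (1 - x) by ring. change (match M with 0%nat => 1 | S _ => INR M + 1 end) with (INR (S M)). rewrite (a_S M). simpl pow. pose proof (pos_INR M). field. lra. }
    rewrite a_S, S_INR.
    set (s := sqrt (1 - x)) in *. set (X := x ^ M). simpl pow. fold X.
    assert (Hx' : x = 1 - s * s) by lra.
    pose proof (pos_INR M).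
    clearbody s X. subst x.
    field. lra.
Qed.

Lemma der_cont f x l : is_derive f x l -> continuity_pt f x.
Proof.
  intros H. apply continuity_pt_filterlim. apply (ex_derive_continuous f x). exists l; exact H.
Qed.

Definition dh (M : nat) (y : R) : R := - (INR M + / 2) * a M * y ^ M / sqrt (1 - y).

Lemma h_mvt M x : x < 1 -> exists c, Rmin 0 x <= c <= Rmax 0 x /\ h M x - 1 = dh M c * x.
Proof.
  intros Hx.
  assert (Hmax : Rmax 0 x < 1) by (unfold Rmax; destruct (Rle_dec 0 x); lra).
  destruct (MVT_gen (h M) 0 x (dh M)) as [c [Hc E]].
  - intros y Hy. apply h_der. lra.
  - intros y Hy. apply der_cont with (dh M y). apply h_der. lra.
  - exists c. split; [exact Hc|]. rewrite h_0 in E. rewrite E. ring.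
Qed.

Lemma odd_pow_sign N c x : (0 <= c /\ 0 <= x) \/ (c <= 0 /\ x <= 0) ->
  0 <= c ^ (2 * N + 1) * x.
Proof.
  intros H.
  replace (c ^ (2 * N + 1)) with ((c ^ 2) ^ N * c)
    by (rewrite <- pow_mult, pow_add; simpl; ring).
  assert (0 <= (c ^ 2) ^ N) by (apply pow_le; simpl; nra).
  assert (0 <= c * x) by nra.
  nra.
Qed.

Lemma h_le1 N x : -1 < x < 1 -> h (2 * N + 1) x <= 1.
Proof.
  intros Hx. destruct (h_mvt (2 * N + 1) x ltac:(lra)) as [c [Hc E]].
  assert (Hc1 : c < 1) by (unfold Rmax in Hc; destruct (Rle_dec 0 x); lra).
  assert (Hsg : 0 <= c ^ (2 * N + 1) * x).
  { apply odd_pow_sign. unfold Rmin, Rmax in Hc; destruct (Rle_dec 0 x); [left|right]; lra. }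
  assert (dh (2 * N + 1) c * x <= 0).
  { unfold dh.
    pose proof (sqrt_lt_R0 (1 - c) ltac:(lra)).
    pose proof (a_pos (2 * N + 1)). pose proof (pos_INR (2 * N + 1)).
    replace (- (INR (2 * N + 1) + / 2) * a (2 * N + 1) * c ^ (2 * N + 1) / sqrt (1 - c) * x)
      with (- ((INR (2 * N + 1) + / 2) * a (2 * N + 1) * (c ^ (2 * N + 1) * x) * / sqrt (1 - c)))
      by (field; lra).
    apply Ropp_le_cancel. rewrite Ropp_involutive, Ropp_0.
    apply Rmult_le_pos; [|left; apply Rinv_0_lt_compat; lra].
    apply Rmult_le_pos; [|exact Hsg]. apply Rmult_le_pos; lra. }
  lra.
Qed.

Lemma h_ge M r x : 0 <= r < 1 -> Rabs x <= r ->
  1 - h M x <= (INR M + 1) * r ^ M / sqrt (1 - r).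
Proof.
  intros Hr Hxr.
  assert (Hx : Rabs x <= r) by exact Hxr.
  apply Rabs_le_between in Hxr.
  destruct (h_mvt M x ltac:(lra)) as [c [Hc E]].
  assert (Hcr : Rabs c <= r).
  { unfold Rmin, Rmax in Hc; destruct (Rle_dec 0 x); apply Rabs_le; lra. }
  apply Rabs_le_between in Hcr as Hcr'.
  pose proof (sqrt_lt_R0 (1 - c) ltac:(lra)) as Hsc.
  pose proof (sqrt_lt_R0 (1 - r) ltac:(lra)) as Hsr.
  assert (Hsq : sqrt (1 - r) <= sqrt (1 - c)) by (apply sqrt_le_1_alt; lra).
  pose proof (a_pos M). pose proof (a_le1 M). pose proof (pos_INR M).
  assert (Eq : 1 - h M x = (INR M + / 2) * a M * (c ^ M * x) * / sqrt (1 - c)).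
  { unfold dh in E. field_simplify in E; [|lra]. field_simplify; [|lra]. lra. }
  rewrite Eq. unfold Rdiv.
  apply Rle_trans with (Rabs ((INR M + / 2) * a M * (c ^ M * x) * / sqrt (1 - c))); [apply Rle_abs|].
  rewrite !Rabs_mult, <- RPow_abs.
  rewrite (Rabs_pos_eq (INR M + /2)) by lra.
  rewrite (Rabs_pos_eq (a M)) by lra.
  rewrite (Rabs_pos_eq (/ sqrt (1 - c))) by (left; apply Rinv_0_lt_compat; lra).
  assert (Hp : Rabs c ^ M <= r ^ M) by (apply pow_incr; split; [apply Rabs_pos|lra]).
  assert (Hq : Rabs c ^ M * Rabs x <= r ^ M).
  { pose proof (pow_le (Rabs c) M (Rabs_pos c)). pose proof (Rabs_pos x). nra. }
  assert (Hi : / sqrt (1 - c) <= / sqrt (1 - r)) by (apply Rinv_le_contravar; lra).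
  assert (Hk : (INR M + / 2) * a M <= INR M + 1) by nra.
  apply Rmult_le_compat.
  - apply Rmult_le_pos; [apply Rmult_le_pos; lra|].
    apply Rmult_le_pos; [apply pow_le, Rabs_pos| apply Rabs_pos].
  - left; apply Rinv_0_lt_compat; lra.
  - apply Rmult_le_compat; try lra.
    + apply Rmult_le_pos; lra.
    + apply Rmult_le_pos; [apply pow_le, Rabs_pos| apply Rabs_pos].
  - exact Hi.
Qed.


Definition c (n : nat) : R := a (2 * n) / (2 * INR n + 1).
Definition P (N : nat) (s : R) : R := sum_f_R0 (fun n => c n * s ^ (2 * n + 1)) N.
Definition E (N : nat) (s : R) : R := sum_f_R0 (fun n => a (2 * n) * s ^ (2 * n)) N.

Lemma c_pos n : 0 < c n.
Proof. unfold c. pose proof (a_pos (2*n)). pose proof (pos_INR n).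
  apply Rdiv_lt_0_compat; lra. Qed.

Lemma mono_der n s : is_derive (fun y => c n * y ^ (2 * n + 1)) s (a (2 * n) * s ^ (2 * n)).
Proof.
  replace (2 * n + 1)%nat with (S (2 * n)) by lia.
  auto_derive; [exact I|].
  change (match (n + (n + 0))%nat with 0%nat => 1 | S _ => INR (n + (n + 0)) + 1 end)
    with (INR (S (n + (n + 0)))).
  replace (n + (n + 0))%nat with (2 * n)%nat by lia.
  rewrite S_INR, mult_INR. unfold c. simpl (INR 2).
  pose proof (pos_INR n). field. lra.
Qed.

Lemma P_der N s : is_derive (P N) s (E N s).
Proof.
  induction N as [|N IH].
  - apply is_derive_ext with (fun y => c 0 * y ^ (2 * 0 + 1)).
    { intros t; unfold P; simpl; ring. }
    unfold E; simpl sum_f_R0. apply mono_der.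
  - apply is_derive_ext with (fun y => P N y + c (S N) * y ^ (2 * S N + 1)).
    { intros t; unfold P; simpl; ring. }
    apply der_plus with (1 := IH) (2 := mono_der (S N) s).
    unfold E; simpl; ring.
Qed.

Lemma negpow_even k s : (- s) ^ (2 * k) = s ^ (2 * k).
Proof. rewrite !pow_mult. f_equal. ring. Qed.

Lemma E_G N s : E N s = (G (2 * N + 1) s + G (2 * N + 1) (- s)) / 2.
Proof.
  induction N as [|N IH].
  - unfold E, G; simpl. field.
  - unfold E in *. rewrite tech5, IH. cbv beta.
    replace (2 * S N + 1)%nat with (S (S (2 * N + 1))) by lia.
    unfold G; rewrite !tech5. cbv beta.
    replace (S (2 * N + 1)) with (2 * S N)%nat by lia.
    rewrite negpow_even.
    replace (S (2 * S N)) with (2 * S N + 1)%nat by lia.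
    rewrite pow_add, (pow_add (- s)), negpow_even. field.
Qed.

Definition f (s : R) : R := sqrt (1 + s) - sqrt (1 - s).
Definition phi (N : nat) (s : R) : R := f s - P N s.
Definition dphi (N : nat) (s : R) : R := / (2 * sqrt (1 + s)) + / (2 * sqrt (1 - s)) - E N s.

Lemma phi_der N s : -1 < s < 1 -> is_derive (phi N) s (dphi N s).
Proof.
  intros Hs. unfold phi, dphi, f.
  apply (is_derive_minus (fun y => sqrt (1 + y) - sqrt (1 - y)) (P N)); [|apply P_der].
  auto_derive; [lra|]. replace (1 + - s) with (1 - s) by ring. field.
  split; apply Rgt_not_eq, sqrt_lt_R0; lra.
Qed.

Lemma dphi_eq N s : -1 < s < 1 ->
  dphi N s = ((1 - h (2 * N + 1) s) / sqrt (1 - s) + (1 - h (2 * N + 1) (- s)) / sqrt (1 + s)) / 2.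
Proof.
  intros Hs. unfold dphi, h. rewrite E_G.
  replace (1 - - s) with (1 + s) by ring.
  pose proof (sqrt_lt_R0 (1 - s) ltac:(lra)).
  pose proof (sqrt_lt_R0 (1 + s) ltac:(lra)).
  field. lra.
Qed.

Lemma P_0 N : P N 0 = 0.
Proof.
  unfold P; induction N as [|N IH].
  - simpl. ring.
  - rewrite tech5, IH, pow_i by lia. ring.
Qed.

Lemma phi_0 N : phi N 0 = 0.
Proof. unfold phi, f. rewrite P_0. replace (1 + 0) with 1 by ring.
  replace (1 - 0) with 1 by ring. ring. Qed.

Lemma phi_mvt N s : 0 <= s < 1 -> exists y, 0 <= y <= s /\ phi N s = dphi N y * s.
Proof.
  intros Hs.
  destruct (MVT_gen (phi N) 0 s (dphi N)) as [y [Hy Ey]].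
  - intros t Ht. rewrite Rmin_left, Rmax_right in Ht by lra. apply phi_der. lra.
  - intros t Ht. rewrite Rmin_left, Rmax_right in Ht by lra.
    apply der_cont with (dphi N t). apply phi_der. lra.
  - rewrite Rmin_left, Rmax_right in Hy by lra. exists y. split; [exact Hy|].
    rewrite phi_0 in Ey. lra.
Qed.

Lemma dphi_nonneg N y : 0 <= y < 1 -> 0 <= dphi N y.
Proof.
  intros Hy. rewrite dphi_eq by lra.
  pose proof (h_le1 N y ltac:(lra)). pose proof (h_le1 N (- y) ltac:(lra)).
  pose proof (sqrt_lt_R0 (1 - y) ltac:(lra)).
  pose proof (sqrt_lt_R0 (1 + y) ltac:(lra)).
  assert (0 <= (1 - h (2 * N + 1) y) / sqrt (1 - y)) by (apply Rdiv_le_0_compat; lra).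
  assert (0 <= (1 - h (2 * N + 1) (- y)) / sqrt (1 + y)) by (apply Rdiv_le_0_compat; lra).
  lra.
Qed.

Lemma phi_nonneg N s : 0 <= s < 1 -> 0 <= phi N s.
Proof.
  intros Hs. destruct (phi_mvt N s Hs) as [y [Hy E1]]. rewrite E1.
  apply Rmult_le_pos; [apply dphi_nonneg; lra | lra].
Qed.

Definition epsr (N : nat) (r : R) : R :=
  (INR (2 * N + 1) + 1) * r ^ (2 * N + 1) / sqrt (1 - r) / sqrt (1 - r).

Lemma phi_small N r s : 0 <= r < 1 -> 0 <= s <= r -> phi N s <= epsr N r.
Proof.
  intros Hr Hs. destruct (phi_mvt N s ltac:(lra)) as [y [Hy E1]]. rewrite E1.
  set (K := (INR (2 * N + 1) + 1) * r ^ (2 * N + 1) / sqrt (1 - r)).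
  assert (H1 : 1 - h (2 * N + 1) y <= K) by (apply h_ge; [lra| rewrite Rabs_pos_eq; lra]).
  assert (H2 : 1 - h (2 * N + 1) (- y) <= K) by (apply h_ge; [lra| rewrite Rabs_Ropp, Rabs_pos_eq; lra]).
  pose proof (h_le1 N y ltac:(lra)). pose proof (h_le1 N (- y) ltac:(lra)).
  pose proof (sqrt_lt_R0 (1 - y) ltac:(lra)).
  pose proof (sqrt_lt_R0 (1 + y) ltac:(lra)).
  pose proof (sqrt_lt_R0 (1 - r) ltac:(lra)).
  assert (Hsr : sqrt (1 - r) <= sqrt (1 - y)) by (apply sqrt_le_1_alt; lra).
  assert (Hs1 : sqrt (1 - r) <= sqrt 1) by (apply sqrt_le_1_alt; lra).
  assert (Hs2 : sqrt 1 <= sqrt (1 + y)) by (apply sqrt_le_1_alt; lra).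
  rewrite sqrt_1 in Hs1, Hs2.
  assert (K0 : 0 <= K).
  { unfold K. apply Rdiv_le_0_compat; [|lra]. apply Rmult_le_pos.
    pose proof (pos_INR (2 * N + 1)); lra. apply pow_le; lra. }
  assert (A1 : (1 - h (2 * N + 1) y) / sqrt (1 - y) <= K / sqrt (1 - r)).
  { unfold Rdiv. apply Rmult_le_compat; try lra.
    left; apply Rinv_0_lt_compat; lra. apply Rinv_le_contravar; lra. }
  assert (A2 : (1 - h (2 * N + 1) (- y)) / sqrt (1 + y) <= K / sqrt (1 - r)).
  { apply Rle_trans with K.
    - unfold Rdiv. apply Rle_trans with ((1 - h (2 * N + 1) (- y)) * 1).
      + apply Rmult_le_compat_l; [lra|].
        assert (Hi1 : / sqrt (1 + y) <= / 1) by (apply Rinv_le_contravar; lra).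
        rewrite Rinv_1 in Hi1. exact Hi1.
      + lra.
    - unfold Rdiv. rewrite <- (Rmult_1_r K) at 1. apply Rmult_le_compat_l; [lra|].
      assert (Hi1 : / 1 <= / sqrt (1 - r)) by (apply Rinv_le_contravar; lra).
      rewrite Rinv_1 in Hi1. exact Hi1. }
  rewrite dphi_eq by lra.
  assert (K / sqrt (1 - r) = epsr N r) by (unfold epsr, K; reflexivity).
  assert (0 <= K / sqrt (1 - r)) by (apply Rdiv_le_0_compat; lra).
  assert (0 <= ((1 - h (2 * N + 1) y) / sqrt (1 - y) + (1 - h (2 * N + 1) (- y)) / sqrt (1 + y)) / 2).
  { assert (0 <= (1 - h (2 * N + 1) y) / sqrt (1 - y)) by (apply Rdiv_le_0_compat; lra).
    assert (0 <= (1 - h (2 * N + 1) (- y)) / sqrt (1 + y)) by (apply Rdiv_le_0_compat; lra). lra. }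
  nra.
Qed.


Lemma sinpow_der m t : is_derive (fun y => sin y ^ (S m)) t (INR (S m) * sin t ^ m * cos t).
Proof.
  auto_derive; [exact I|].
  change (match m with 0%nat => 1 | S _ => INR m + 1 end) with (INR (S m)). ring.
Qed.

Definition J (n : nat) (t : R) : R := cos t * sum_f_R0 (fun k => a k * sin t ^ (2 * k)) n.

Lemma J_der n t : is_derive (J n) t (- (2 * INR n + 1) * a n * sin t ^ (2 * n + 1)).
Proof.
  induction n as [|n IH].
  - apply is_derive_ext with cos.
    { intros y; unfold J; simpl; ring. }
    auto_derive; [exact I|]. simpl. ring.
  - apply is_derive_ext with (fun y => J n y + a (S n) * (cos y * sin y ^ (S (S (2 * n))))).
    { intros y; unfold J; rewrite tech5.
      replace (2 * S n)%nat with (S (S (2 * n))) by lia. match goal with |- @eq _ ?A ?B => change (@eq R A B) end; ring. }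
    apply der_plus with (1 := IH)
      (l2 := a (S n) * (- sin t * sin t ^ (S (S (2 * n))) + cos t * (INR (S (S (2 * n))) * sin t ^ (S (2 * n)) * cos t))).
    { apply is_derive_scal.
      apply (is_derive_mult cos (fun y => sin y ^ (S (S (2 * n))))).
      - auto_derive; [exact I|]. ring.
      - apply sinpow_der.
      - intros; apply Rmult_comm. }
    rewrite a_S.
    replace (2 * S n + 1)%nat with (S (S (S (2 * n)))) by lia.
    replace (2 * n + 1)%nat with (S (2 * n)) by lia.
    rewrite !S_INR, mult_INR.
    rewrite <- !tech_pow_Rmult.
    set (X := sin t ^ (2 * n)).
    pose proof (sin2_cos2 t) as Hsc. unfold Rsqr in Hsc.
    assert (Hc : cos t * cos t = 1 - sin t * sin t) by lra.
    pose proof (pos_INR n).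
    match goal with |- context [cos t * (?K * cos t)] =>
      replace (cos t * (K * cos t)) with (K * (cos t * cos t)) by ring end.
    rewrite Hc. replace (INR 2) with 2 by (simpl; lra). field. lra.
Qed.

Lemma mvt (g dg : R -> R) x y : (forall z, is_derive g z (dg z)) -> x <= y ->
  exists z, x <= z <= y /\ g y - g x = dg z * (y - x).
Proof.
  intros Hd Hxy.
  destruct (MVT_gen g x y dg) as [z [Hz E]].
  - intros; apply Hd.
  - intros; apply der_cont with (dg x0); apply Hd.
  - rewrite Rmin_left, Rmax_right in Hz by lra. exists z; auto.
Qed.

Definition t0 (n : nat) : R := a (2 * n) / ((2 * INR n + 1) * (2 * INR n + 1) * a n).
Definition Anum (N : nat) (t : R) : R := sum_f_R0 (fun n => t0 n * (1 - J n t)) N.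
Definition Q (N : nat) (t : R) : R := P N (sin t).

Lemma der_lin k g x l : is_derive g x l -> is_derive (fun y => k * (1 - g y)) x (- (k * l)).
Proof.
  intros H. replace (- (k * l)) with (k * (0 - l)) by ring.
  apply (is_derive_scal (fun y => 1 - g y)).
  assert (Hc : is_derive (fun _ : R => 1) x 0) by (auto_derive; [exact I| ring]).
  apply (is_derive_minus (fun _ => 1) g); [exact Hc | exact H].
Qed.

Lemma term_der n t : is_derive (fun y => t0 n * (1 - J n y)) t (c n * sin t ^ (2 * n + 1)).
Proof.
  replace (c n * sin t ^ (2 * n + 1)) with (- (t0 n * (- (2 * INR n + 1) * a n * sin t ^ (2 * n + 1)))).
  - apply der_lin, J_der.
  - unfold t0, c. pose proof (a_pos n). pose proof (pos_INR n). field. lra.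
Qed.

Lemma A_der N t : is_derive (Anum N) t (Q N t).
Proof.
  induction N as [|N IH].
  - apply is_derive_ext with (fun y => t0 0 * (1 - J 0 y)).
    { intros y; unfold Anum; simpl; reflexivity. }
    unfold Q, P; simpl sum_f_R0. apply term_der.
  - apply is_derive_ext with (fun y => Anum N y + t0 (S N) * (1 - J (S N) y)).
    { intros y; unfold Anum; rewrite tech5; reflexivity. }
    apply der_plus with (1 := IH) (2 := term_der (S N) t).
    unfold Q, P; rewrite tech5; reflexivity.
Qed.

Lemma sum0_pow n : sum_f_R0 (fun k => a k * 0 ^ (2 * k)) n = 1.
Proof.
  induction n as [|n IH]; [simpl; ring|].
  rewrite tech5, IH, pow_i by lia. ring.
Qed.

Lemma A_0 N : Anum N 0 = 0.
Proof.
  unfold Anum. induction N as [|N IH].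
  - simpl. unfold J. rewrite sin_0, cos_0, sum0_pow. ring.
  - rewrite tech5, IH. unfold J. rewrite sin_0, cos_0, sum0_pow. ring.
Qed.

Lemma A_pi2 N : Anum N (PI / 2) = sum_f_R0 t0 N.
Proof.
  unfold Anum. apply sum_eq. intros i _. unfold J. rewrite cos_PI2. ring.
Qed.

Definition Bf (t : R) : R := 4 - 4 * cos (t / 2).

Lemma B_der t : is_derive Bf t (2 * sin (t / 2)).
Proof. unfold Bf. auto_derive; [exact I|].
  match goal with |- @eq _ ?A ?B => change (@eq R A B) end. unfold Rdiv. lra. Qed.

Lemma B_0 : Bf 0 = 0.
Proof. unfold Bf. replace (0 / 2) with 0 by field. rewrite cos_0. ring. Qed.

Lemma B_pi2 : Bf (PI / 2) = 4 - 2 * sqrt 2.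
Proof.
  unfold Bf. replace (PI / 2 / 2) with (PI / 4) by field. rewrite cos_PI4.
  pose proof (sqrt_lt_R0 2 ltac:(lra)). pose proof (sqrt_sqrt 2 ltac:(lra)).
  assert (E : 1 / sqrt 2 = sqrt 2 / 2).
  { field_simplify_eq; [|lra]. simpl. lra. }
  rewrite E. lra.
Qed.

Lemma F_eq t : 0 <= t <= PI / 2 -> 2 * sin (t / 2) = f (sin t).
Proof.
  intros Ht. pose proof PI_RGT_0.
  set (u := t / 2).
  assert (Hst : sin t = 2 * sin u * cos u) by (rewrite <- sin_2a; f_equal; unfold u; field).
  pose proof (sin2_cos2 u) as Hsc. unfold Rsqr in Hsc.
  assert (HS : 0 <= sin u) by (apply sin_ge_0; unfold u; lra).
  assert (HCS : 0 <= cos u - sin u).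
  { assert (H0 : 0 <= cos (u + PI / 4)) by (apply cos_ge_0; unfold u; lra).
    rewrite cos_plus, cos_PI4, sin_PI4 in H0.
    pose proof (sqrt_lt_R0 2 ltac:(lra)).
    assert (0 <= (cos u - sin u) * (1 / sqrt 2)) by lra.
    assert (0 < 1 / sqrt 2) by (apply Rdiv_lt_0_compat; lra). nra. }
  unfold f. rewrite Hst.
  replace (1 + 2 * sin u * cos u) with (Rsqr (sin u + cos u)) by (unfold Rsqr; nra).
  replace (1 - 2 * sin u * cos u) with (Rsqr (cos u - sin u)) by (unfold Rsqr; nra).
  rewrite !sqrt_Rsqr by lra. ring.
Qed.


Definition Dfun (N : nat) (t : R) : R := Bf t - Anum N t.

Lemma D_der N t : is_derive (Dfun N) t (2 * sin (t / 2) - Q N t).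
Proof. apply (is_derive_minus Bf (Anum N)); [apply B_der | apply A_der]. Qed.

Lemma sin_lt1 t : 0 <= t < PI / 2 -> sin t < 1.
Proof.
  intros Ht. pose proof PI_RGT_0.
  assert (0 < cos t) by (apply cos_gt_0; lra).
  pose proof (sin2_cos2 t) as Hsc. unfold Rsqr in Hsc. nra.
Qed.

Lemma dD_phi N t : 0 <= t <= PI / 2 -> 2 * sin (t / 2) - Q N t = phi N (sin t).
Proof. intros Ht. rewrite F_eq by lra. unfold Q, phi. reflexivity. Qed.

Lemma Q_nonneg N t : 0 <= t <= PI -> 0 <= Q N t.
Proof.
  intros Ht. unfold Q, P. apply cond_pos_sum. intros n.
  apply Rmult_le_pos; [left; apply c_pos|]. apply pow_le, sin_ge_0; lra.
Qed.

Lemma Q_le N t : 0 <= t <= PI -> Q N t <= P N 1.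
Proof.
  intros Ht. unfold Q, P. apply sum_Rle. intros n _.
  apply Rmult_le_compat_l; [left; apply c_pos|].
  rewrite <- (pow1 (2 * n + 1)). apply pow_incr. split; [apply sin_ge_0; lra| rewrite pow1; apply SIN_bound].
Qed.


Lemma PI_pos' : 0 < PI. Proof. exact PI_RGT_0. Qed.

Lemma A_le_B (N : nat) (u : R) (Hu : 0 < u < PI / 2) : Anum N u <= Bf u.
Proof.
  pose proof PI_pos'.
  destruct (mvt (Dfun N) _ 0 u (D_der N) ltac:(lra)) as [z [Hz Ez]].
  unfold Dfun in Ez. rewrite A_0, B_0 in Ez.
  rewrite dD_phi in Ez by lra.
  assert (0 <= phi N (sin z)).
  { apply phi_nonneg. split; [apply sin_ge_0; lra| apply sin_lt1; lra]. }
  nra.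
Qed.

Lemma A_ge_B (N : nat) (u : R) (Hu : 0 < u < PI / 2) : Bf u - epsr N (sin u) * (PI / 2) <= Anum N u.
Proof.
  pose proof PI_pos'.
  destruct (mvt (Dfun N) _ 0 u (D_der N) ltac:(lra)) as [z [Hz Ez]].
  unfold Dfun in Ez. rewrite A_0, B_0 in Ez.
  rewrite dD_phi in Ez by lra.
  assert (Hsu : sin u < 1) by (apply sin_lt1; lra).
  assert (Hsu0 : 0 <= sin u) by (apply sin_ge_0; lra).
  assert (Hp : phi N (sin z) <= epsr N (sin u)).
  { apply phi_small; [lra|]. split; [apply sin_ge_0; lra|]. apply sin_incr_1; lra. }
  assert (0 <= phi N (sin z)).
  { apply phi_nonneg. split; [apply sin_ge_0; lra| apply sin_lt1; lra]. }
  assert (0 <= epsr N (sin u)) by lra.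
  nra.
Qed.

Lemma A_mono (N : nat) (u : R) (Hu : 0 < u < PI / 2) : Anum N u <= Anum N (PI / 2).
Proof.
  pose proof PI_pos'.
  destruct (mvt (Anum N) _ u (PI / 2) (A_der N) ltac:(lra)) as [z [Hz Ez]].
  assert (0 <= Q N z) by (apply Q_nonneg; lra). nra.
Qed.

Lemma A_top (N : nat) (u : R) (Hu : 0 < u < PI / 2) : Anum N (PI / 2) <= Anum N u + P N 1 * (PI / 2 - u).
Proof.
  pose proof PI_pos'.
  destruct (mvt (Anum N) _ u (PI / 2) (A_der N) ltac:(lra)) as [z [Hz Ez]].
  assert (Q N z <= P N 1) by (apply Q_le; lra). nra.
Qed.

Lemma B_mono (u : R) (Hu : 0 < u < PI / 2) : Bf u <= Bf (PI / 2).
Proof.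
  pose proof PI_pos'.
  destruct (mvt Bf _ u (PI / 2) B_der ltac:(lra)) as [z [Hz Ez]].
  assert (0 <= sin (z / 2)) by (apply sin_ge_0; lra). nra.
Qed.

Lemma nr_lim r : 0 <= r < 1 -> forall e, 0 < e ->
  exists M0, forall M, (M >= M0)%nat -> (INR M + 1) * r ^ M < e.
Proof.
  intros Hr e He.
  set (s := (1 + r) / 2).
  assert (Hs : 1/2 <= s < 1) by (unfold s; lra).
  set (d := (1 - s) / s).
  assert (Hd : 0 < d) by (unfold d; apply Rdiv_lt_0_compat; lra).
  set (C := 1 + / d).
  assert (HC : 0 < C) by (unfold C; pose proof (Rinv_0_lt_compat d Hd); lra).
  destruct (pow_lt_1_zero s ltac:(rewrite Rabs_pos_eq; lra) (e / C) ltac:(apply Rdiv_lt_0_compat; lra))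
    as [M0 HM0].
  exists M0. intros M HM. specialize (HM0 M HM).
  rewrite Rabs_pos_eq in HM0 by (apply pow_le; lra).
  assert (Hsd : s * (1 + d) = 1) by (unfold d; field; lra).
  assert (Hpow : s ^ M * (1 + d) ^ M = 1) by (rewrite <- Rpow_mult_distr, Hsd; apply pow1).
  pose proof (Rle_pow_lin d M ltac:(lra)) as Hb.
  pose proof (pos_INR M).
  assert (HsM : 0 < s ^ M) by (apply pow_lt; lra).
  assert (H1 : (INR M + 1) * s ^ M <= C).
  { unfold C.
    assert (Hx : (INR M + 1) <= (1 + / d) * (1 + INR M * d)).
    { assert (/ d * (INR M * d) = INR M) by (field; lra).
      assert (0 <= / d) by (left; apply Rinv_0_lt_compat; lra).
      assert (0 <= INR M * d) by nra. nra. }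
    assert (Hy : (1 + INR M * d) * s ^ M <= 1).
    { apply Rle_trans with ((1 + d) ^ M * s ^ M); [apply Rmult_le_compat_r; lra | lra]. }
    assert (0 <= 1 + / d) by (pose proof (Rinv_0_lt_compat d Hd); lra).
    nra. }
  assert (Hrs : r ^ M <= s ^ M * s ^ M).
  { rewrite <- Rpow_mult_distr. apply pow_incr. split; [lra|]. unfold s. nra. }
  assert (0 <= (INR M + 1)) by lra.
  apply Rle_lt_trans with ((INR M + 1) * (s ^ M * s ^ M)).
  { apply Rmult_le_compat_l; lra. }
  apply Rle_lt_trans with (C * s ^ M).
  { replace ((INR M + 1) * (s ^ M * s ^ M)) with (((INR M + 1) * s ^ M) * s ^ M) by ring.
    apply Rmult_le_compat_r; lra. }
  replace e with (C * (e / C)) by (field; lra).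
  apply Rmult_lt_compat_l; lra.
Qed.

Lemma epsr_small r : 0 <= r < 1 -> forall e, 0 < e -> exists N, epsr N r < e.
Proof.
  intros Hr e He.
  destruct (nr_lim r Hr (e * (1 - r)) ltac:(nra)) as [M0 HM0].
  exists M0. specialize (HM0 (2 * M0 + 1)%nat ltac:(lia)).
  unfold epsr.
  pose proof (sqrt_lt_R0 (1 - r) ltac:(lra)). pose proof (sqrt_sqrt (1 - r) ltac:(lra)).
  replace ((INR (2 * M0 + 1) + 1) * r ^ (2 * M0 + 1) / sqrt (1 - r) / sqrt (1 - r))
    with ((INR (2 * M0 + 1) + 1) * r ^ (2 * M0 + 1) / (sqrt (1 - r) * sqrt (1 - r)))
    by (field; lra).
  rewrite H0. apply Rmult_lt_reg_r with (1 - r); [lra|].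
  unfold Rdiv. rewrite Rmult_assoc, Rinv_l by lra. lra.
Qed.

Lemma le_eps x y K : 0 <= K -> (forall d, 0 < d < PI / 2 -> x <= y + K * d) -> x <= y.
Proof.
  intros HK H. pose proof PI_RGT_0.
  destruct (Rle_dec x y) as [|Hn]; [assumption|]. exfalso.
  set (d := Rmin (PI / 4) ((x - y) / (2 * (K + 1)))).
  assert (Hd1 : d <= PI / 4) by apply Rmin_l.
  assert (Hd2 : d <= (x - y) / (2 * (K + 1))) by apply Rmin_r.
  assert (Hd0 : 0 < d).
  { unfold d. apply Rmin_glb_lt; [lra|]. apply Rdiv_lt_0_compat; lra. }
  specialize (H d ltac:(lra)).
  assert (K * d <= (K + 1) * d) by nra.
  assert ((K + 1) * d <= (x - y) / 2).
  { replace ((x - y) / 2) with ((K + 1) * ((x - y) / (2 * (K + 1)))) by (field; lra).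
    apply Rmult_le_compat_l; lra. }
  lra.
Qed.

Lemma t0_nonneg n : 0 <= t0 n.
Proof.
  unfold t0. pose proof (a_pos n). pose proof (a_pos (2 * n)). pose proof (pos_INR n).
  left. apply Rdiv_lt_0_compat; [lra|]. apply Rmult_lt_0_compat; [|lra]. nra.
Qed.

Lemma S_mono m n : (m <= n)%nat -> sum_f_R0 t0 m <= sum_f_R0 t0 n.
Proof.
  induction 1; [lra|]. rewrite tech5. pose proof (t0_nonneg (S m0)). lra.
Qed.

Lemma S_upper N : sum_f_R0 t0 N <= 4 - 2 * sqrt 2.
Proof.
  rewrite <- A_pi2, <- B_pi2.
  apply (le_eps _ _ (P N 1)).
  { unfold P. apply cond_pos_sum. intros n. rewrite pow1. left. rewrite Rmult_1_r. apply c_pos. }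
  intros d Hd.
  set (u := PI / 2 - d).
  assert (Hu : 0 < u < PI / 2) by (unfold u; lra).
  pose proof (A_top N u Hu). pose proof (A_le_B N u Hu). pose proof (B_mono u Hu).
  replace (PI / 2 - u) with d in * by (unfold u; ring). lra.
Qed.

Lemma S_lower e : 0 < e -> exists N, 4 - 2 * sqrt 2 - e < sum_f_R0 t0 N.
Proof.
  intros He. pose proof PI_RGT_0.
  pose proof (der_cont Bf (PI / 2) _ (B_der (PI / 2))) as Hc.
  unfold continuity_pt, continue_in, limit1_in, limit_in in Hc. simpl in Hc.
  destruct (Hc (e / 2) ltac:(lra)) as [al [Hal Hal2]].
  set (u := PI / 2 - Rmin al (PI / 2) / 2).
  assert (Hm1 : Rmin al (PI / 2) <= al) by apply Rmin_l.
  assert (Hm2 : Rmin al (PI / 2) <= PI / 2) by apply Rmin_r.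
  assert (Hm0 : 0 < Rmin al (PI / 2)) by (apply Rmin_glb_lt; lra).
  assert (Hu : 0 < u < PI / 2) by (unfold u; lra).
  assert (HBu : Bf (PI / 2) - e / 2 < Bf u).
  { assert (Hx : D_x no_cond (PI / 2) u /\ R_dist u (PI / 2) < al).
    { split. split; [exact I| unfold u; lra].
      unfold R_dist. rewrite Rabs_left1 by (unfold u; lra). unfold u; lra. }
    specialize (Hal2 u Hx). unfold R_dist in Hal2.
    apply Rabs_def2 in Hal2. lra. }
  assert (Hr : 0 <= sin u < 1) by (split; [apply sin_ge_0; lra| apply sin_lt1; lra]).
  destruct (epsr_small (sin u) Hr (e / PI) ltac:(apply Rdiv_lt_0_compat; lra)) as [N HN].
  exists N. rewrite <- A_pi2, <- B_pi2.
  pose proof (A_ge_B N u Hu). pose proof (A_mono N u Hu).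
  assert (epsr N (sin u) * (PI / 2) < e / 2).
  { apply Rlt_le_trans with (e / PI * (PI / 2)).
    - apply Rmult_lt_compat_r; lra.
    - right. field. lra. }
  lra.
Qed.

Theorem part1 : is_series t0 (4 - 2 * sqrt 2).
Proof.
  apply is_series_Reals. intros e He.
  destruct (S_lower e He) as [N0 HN0].
  exists N0. intros n Hn. unfold R_dist.
  pose proof (S_upper n). pose proof (S_mono N0 n Hn).
  rewrite Rabs_left1 by lra. lra.
Qed.


Lemma term0_t0 n : term 0 n = t0 n.
Proof.
  rewrite term_a. unfold t0. replace (n + 0)%nat with n by lia. simpl (INR 0). simpl pow.
  pose proof (a_pos n). pose proof (pos_INR n). field. lra.
Qed.

Lemma part1' : is_series (series_from1 0) (3 - 2 * sqrt 2).
Proof.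
  unfold series_from1. apply (is_series_incr_1 (fun n => term 0 n)).
  apply is_series_ext with t0; [intros; symmetry; apply term0_t0|].
  match goal with |- is_series _ ?L => replace L with (4 - 2 * sqrt 2) end; [apply part1|].
  change (4 - 2 * sqrt 2 = (3 - 2 * sqrt 2) + term 0 0).
  rewrite term0_t0. unfold t0. simpl. field.
Qed.

Definition u (n : nat) : R := a (2 * n) / a n.

Lemma u_pos n : 0 < u n.
Proof. unfold u. apply Rdiv_lt_0_compat; apply a_pos. Qed.
Lemma u_le1 n : u n <= 1.
Proof.
  unfold u. pose proof (a_pos n). pose proof (a_mono n (2 * n) ltac:(lia)).
  apply Rmult_le_reg_r with (a n); [lra|]. unfold Rdiv. rewrite Rmult_assoc, Rinv_l by lra. lra.
Qed.

Lemma V_lim (V : nat -> R) : (forall n, - / (INR n + 1) <= V n <= 0) -> is_lim_seq V 0.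
Proof.
  intros HV. apply is_lim_seq_Reals. intros e He.
  destruct (archimed_cor1 e He) as [N [HN HN0]].
  exists N. intros n Hn. unfold R_dist. rewrite Rminus_0_r.
  specialize (HV n). rewrite Rabs_left1 by lra.
  assert (HNn : INR N <= INR n) by (apply le_INR; lia).
  assert (0 < INR N) by (apply lt_0_INR; lia).
  assert (/ (INR n + 1) <= / INR N) by (apply Rinv_le_contravar; lra).
  lra.
Qed.

Lemma tele_sum (V : nat -> R) n :
  sum_f_R0 (fun m => V (S (S m)) - V (S m)) n = V (S (S n)) - V 1%nat.
Proof. induction n as [|n IH]; [simpl; ring|]. rewrite tech5, IH. ring. Qed.

Lemma tele (V : nat -> R) : is_lim_seq V 0 ->
  is_series (fun m => V (S (S m)) - V (S m)) (- V 1%nat).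
Proof.
  intros H. apply is_series_Reals. apply is_lim_seq_Reals in H.
  intros e He. destruct (H e He) as [N HN]. exists N. intros n Hn.
  rewrite tele_sum. unfold R_dist in *.
  specialize (HN (S (S n)) ltac:(lia)).
  replace (V (S (S n)) - V 1%nat - - V 1%nat) with (V (S (S n)) - 0) by ring. exact HN.
Qed.

Definition R1 (x : R) : R := - (1 / 15) / (2 * x + 1).
Definition V1 (n : nat) : R := R1 (INR n) * u n.

Lemma id1 n : term 1 n = 7 / 60 * term 0 n + (V1 (S n) - V1 n).
Proof.
  unfold V1, R1, u. rewrite !term_a.
  replace (2 * S n)%nat with (S (S (2 * n))) by lia.
  replace (n + 1)%nat with (S n) by lia. replace (n + 0)%nat with n by lia.
  rewrite !a_S, !S_INR, !mult_INR.
  replace (INR 2) with 2 by (simpl; lra). simpl (INR 1). simpl (INR 0).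
  pose proof (a_pos n). pose proof (a_pos (2 * n)). pose proof (pos_INR n).
  field. repeat split; lra.
Qed.

Definition R2 (x : R) : R := - (1 / 20 + 13 / 315 * x) / ((2 * x + 1) * (2 * x + 3)).
Definition V2 (n : nat) : R := R2 (INR n) * u n.

Lemma id2 n : term 2 n = 107 / 5040 * term 0 n + (V2 (S n) - V2 n).
Proof.
  unfold V2, R2, u. rewrite !term_a.
  replace (2 * S n)%nat with (S (S (2 * n))) by lia.
  replace (n + 2)%nat with (S (S n)) by lia. replace (S n + 2)%nat with (S (S (S n))) by lia.
  replace (n + 0)%nat with n by lia.
  rewrite !a_S, !S_INR, !mult_INR.
  replace (INR 2) with 2 by (simpl; lra). simpl (INR 0).
  pose proof (a_pos n). pose proof (a_pos (2 * n)). pose proof (pos_INR n).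
  field. repeat split; lra.
Qed.

Definition R3 (x : R) : R := - (135 / 2288 + 13 / 168 * x + 271 / 12012 * x * x) /
  ((2 * x + 1) * (2 * x + 3) * (2 * x + 5)).
Definition V3 (n : nat) : R := R3 (INR n) * u n.

Lemma id3 n : term 3 n = 835 / 192192 * term 0 n + (V3 (S n) - V3 n).
Proof.
  unfold V3, R3, u. rewrite !term_a.
  replace (2 * S n)%nat with (S (S (2 * n))) by lia.
  replace (n + 3)%nat with (S (S (S n))) by lia. replace (S n + 3)%nat with (S (S (S (S n)))) by lia.
  replace (n + 0)%nat with n by lia.
  rewrite !a_S, !S_INR, !mult_INR.
  replace (INR 2) with 2 by (simpl; lra). replace (INR 3) with 3 by (simpl; lra). simpl (INR 0).
  pose proof (a_pos n). pose proof (a_pos (2 * n)). pose proof (pos_INR n).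
  field. repeat split; lra.
Qed.

Lemma Rbound p q x : 0 <= x -> 0 <= p -> 0 < q -> p * (x + 1) <= q ->
  - / (x + 1) <= - p / q <= 0.
Proof.
  intros Hx Hp Hq Hpq. split.
  - assert (p / q <= / (x + 1)).
    { apply Rmult_le_reg_r with (q * (x + 1)); [nra|].
      field_simplify; [|lra|lra]. lra. }
    unfold Rdiv in *. lra.
  - unfold Rdiv. assert (0 <= p * / q) by (apply Rmult_le_pos; [lra| left; apply Rinv_0_lt_compat; lra]).
    lra.
Qed.

Lemma Vbound (Rk : R -> R) n : - / (INR n + 1) <= Rk (INR n) <= 0 ->
  - / (INR n + 1) <= Rk (INR n) * u n <= 0.
Proof.
  intros H. pose proof (u_pos n). pose proof (u_le1 n). split; nra.
Qed.

Lemma V1_lim : is_lim_seq V1 0.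
Proof.
  apply V_lim. intros n. apply Vbound. unfold R1. pose proof (pos_INR n).
  apply Rbound; nra.
Qed.

Lemma V2_lim : is_lim_seq V2 0.
Proof.
  apply V_lim. intros n. apply Vbound. unfold R2. pose proof (pos_INR n).
  apply Rbound; nra.
Qed.

Lemma V3_lim : is_lim_seq V3 0.
Proof.
  apply V_lim. intros n. apply Vbound. unfold R3. pose proof (pos_INR n).
  apply Rbound; nra.
Qed.

Lemma part_k (k : nat) (al : R) (V : nat -> R) (l : R) :
  (forall n, term k n = al * term 0 n + (V (S n) - V n)) ->
  is_lim_seq V 0 ->
  l = al * (3 - 2 * sqrt 2) + - V 1%nat ->
  is_series (series_from1 k) l.
Proof.
  intros Hid HV Hl. subst l.
  pose proof (is_series_scal al _ _ part1') as H1.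
  pose proof (is_series_plus _ _ _ _ H1 (tele V HV)) as H2.
  apply is_series_ext with (2 := H2).
  intros n. unfold series_from1. rewrite Hid. reflexivity.
Qed.

Theorem corollary4p0p1 :
  is_series (series_from1 0) (3 - 2 * sqrt 2) /\
  is_series (series_from1 1) ((11 - 7 * sqrt 2) / 30) /\
  is_series (series_from1 2) ((172 - 107 * sqrt 2) / 2520) /\
  is_series (series_from1 3) ((6808 - 4175 * sqrt 2) / 480480).
Proof.
  split; [exact part1'|].
  split; [apply (part_k 1 (7 / 60) V1); [exact id1 | exact V1_lim |] |].
  { unfold V1, R1, u. simpl. field. }
  split; [apply (part_k 2 (107 / 5040) V2); [exact id2 | exact V2_lim |] |].
  { unfold V2, R2, u. simpl. field. }
  apply (part_k 3 (835 / 192192) V3); [exact id3 | exact V3_lim |].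
  unfold V3, R3, u. simpl. field.
Qed.
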